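(* In the elastoplastic setting described in the context, let $(\mathbf{a}^*,\mathbf{b}^*,\mathbf{c}^* )$ be the solution of $\mathbf{F}(\mathbf{a}^*,\mathbf{b}^*,\mathbf{c}^* )=\mathbf{0}$, and let $\mathbf{H}^*\in\partial\mathbf{F}(\mathbf{a}^*,\mathbf{b}^*,\mathbf{c}^* )$ with diagonal blocks $\mathbf{X}_i,\mathbf{Y}_i\in\mathbb{R}^{L\times L}$ ($i=1,\dots,N$) of its last block row, which are of the form $$\mathbf{X}_i=\tau_i\varrho\,\mathbf{c}^*_i\otimes\frac{\mathbf{v}^*_{\varrho,i}}{|\mathbf{v}^*_{\varrho,i}|}-\varrho\sigma_i\mathbf{I}_{L\times L},\qquad \mathbf{Y}_i=\tau_i\Big(\mathbf{c}^*_i\otimes\frac{\mathbf{v}^*_{\varrho,i}}{|\mathbf{v}^*_{\varrho,i}|}+(|\mathbf{v}^*_{\varrho,i}|-\sigma_i)\mathbf{I}_{L\times L}\Big)$$ with $\tau_i\in[0,1]$, $\tau_i=0$ if $|\mathbf{v}^*_{\varrho,i}|<\sigma_i$ and $\tau_i=1$ if $|\mathbf{v}^*_{\varrho,i}|>\sigma_i$, where $\mathbf{v}^*_{\varrho,i}=\mathbf{c}^*_i+\varrho\mathbf{b}^*_i$. Then for every $i\in\{1,\dots,N\}$ the pair $(\mathbf{X}_i,\mathbf{Y}_i)$ is eigencomplementary.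
   Context: Elastoplastic setting. Let $d\in\{2,3\}$, $\Omega\subset\mathbb{R}^d$ a bounded polygonal domain with Lipschitz boundary $\Gamma$, $\Gamma_D\subseteq\Gamma$ closed with positive surface measure, $\Gamma_N=\Gamma\setminus\Gamma_D$. $\mathbb{S}_{d,0}$ denotes the symmetric trace-free $d\times d$ matrices with Frobenius inner product. $\mathbb{C},\mathbb{H}$ are fourth-order elasticity and hardening tensors with the usual symmetries, uniformly elliptic and bounded; $\sigma_y>0$ constant. $V=\{\mathbf{v}\in H^1(\Omega,\mathbb{R}^d):\mathbf{v}|_{\Gamma_D}=\mathbf{0}\}$, $\mathbf{f}\in V^*$, $\mathbf{g}\in H^{-1/2}(\Gamma_N,\mathbb{R}^d)$, $\ell(\mathbf{v})=\langle\mathbf{f},\mathbf{v}\rangle+\langle\mathbf{g},\mathbf{v}\rangle_{\Gamma_N}$, $a((\mathbf{u},\mathbf{p}),(\mathbf{v},\mathbf{q}))=\int_\Omega\mathbb{C}(\boldsymbol\varepsilon(\mathbf{u})-\mathbf{p}):(\boldsymbol\varepsilon(\mathbf{v})-\mathbf{q})+\int_\Omega\mathbb{H}\mathbf{p}:\mathbf{q}$, $\boldsymbol\varepsilon(\mathbf{u})=\tfrac12(\nabla\mathbf{u}+\nabla\mathbf{u}^\top)$. $\mathcal{T}_h$ is a locally quasi-uniform mesh of convex shape-regular quadrilaterals/hexahedra with bi/trilinear bijections $\mathbf{M}_T:[-1,1]^d\to T$ and degrees $p_T\ge1$; $\mathbb{P}_p(\hat T)$ are polynomials of degree $\le p$ in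 each variable. $V_{hp}=\{\mathbf{v}\in V:\mathbf{v}|_T\circ\mathbf{M}_T\in\mathbb{P}_{p_T}(\hat T)^d\}$ with basis $\{\mathbf{e}_k\vartheta_i:k\le d,i\le M\}$. For each $T$, $\hat{\mathbf{x}}_{k,T}$ ($k\le n_T:=p_T^d$) are the tensor Gauss points and $\hat\phi_{k,T}\in\mathbb{P}_{p_T-1}(\hat T)$ the Lagrange basis at them; $\phi_1,\dots,\phi_N$ ($N=\sum_Tn_T$) equal $\hat\phi_{k,T}\circ\mathbf{M}_T^{-1}$ on $T$, $0$ elsewhere. $D_i=\int_\Omega\phi_i>0$, $\sigma_i=D_i^{-1}\int_\Omega\sigma_y\phi_i$. $L=\tfrac12(d-1)(d+2)$, $\boldsymbol\Phi_1,\dots,\boldsymbol\Phi_L$ a Frobenius-orthonormal basis of $\mathbb{S}_{d,0}$ (for $d=2$: $\tfrac1{\sqrt2}\operatorname{diag}(1,-1)$, $\tfrac1{\sqrt2}(\mathbf{e}_1\mathbf{e}_2^\top+\mathbf{e}_2\mathbf{e}_1^\top)$; for $d=3$: $\tfrac1{\sqrt2}\operatorname{diag}(1,-1,0)$, $\tfrac1{\sqrt6}\operatorname{diag}(1,1,-2)$, $\tfrac1{\sqrt2}(\mathbf{e}_j\mathbf{e}_k^\top+\mathbf{e}_k\mathbf{e}_j^\top)$ for $(j,k)=(1,2),(1,3),(2,3)$). Matrices: $A_{d(i-1)+k,d(j-1)+l}=a((\mathbf{e}_l\vartheta_j,\mathbf{0}),(\mathbf{e}_k\vartheta_i,\mathbf{0}))$;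 $C_{L(i-1)+k,L(j-1)+l}=a((\mathbf{0},\boldsymbol\Phi_l\phi_i),(\mathbf{0},\boldsymbol\Phi_k\phi_j))$; $\mathbf{D}=\operatorname{diag}(D_1\mathbf{I}_{L\times L},\dots,D_N\mathbf{I}_{L\times L})$; $B_{d(i-1)+k,L(j-1)+l}=-a((\mathbf{0},\boldsymbol\Phi_l\phi_j),(\mathbf{e}_k\vartheta_i,\mathbf{0}))$; $l_{d(i-1)+k}=-\ell(\mathbf{e}_k\vartheta_i)$. Fix $\varrho>0$. For $\mathbf{b},\mathbf{c}\in\mathbb{R}^{LN}$, $\mathbf{b}_i=(b_{L(i-1)+1},\dots,b_{Li})^\top$, $\mathbf{c}_i$ analogously, $\mathbf{v}_{\varrho,i}=\mathbf{c}_i+\varrho\mathbf{b}_i$, $\mathbf{S}_i(\mathbf{b}_i,\mathbf{c}_i)=\max\{\sigma_i,|\mathbf{v}_{\varrho,i}|\}\mathbf{c}_i-\sigma_i\mathbf{v}_{\varrho,i}$. $\mathbf{F}(\mathbf{a},\mathbf{b},\mathbf{c})=(\mathbf{A}\mathbf{a}+\mathbf{B}\mathbf{b}+\mathbf{l},\ \mathbf{B}^\top\mathbf{a}+\mathbf{C}\mathbf{b}+\mathbf{D}\mathbf{c},\ \mathbf{S}_1(\mathbf{b}_1,\mathbf{c}_1),\dots,\mathbf{S}_N(\mathbf{b}_N,\mathbf{c}_N))$; the equation $\mathbf{F}=\mathbf{0}$ has a unique solution (it is the algebraic form of the discrete mixed elastoplasticity problem). $\partial\mathbf{F}$ is the Clarke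 subdifferential; $\mathbf{x}\otimes\mathbf{y}=\mathbf{x}\mathbf{y}^\top$. A pair $(\mathbf{F},\mathbf{G})$ of real symmetric $L\times L$ matrices is eigencomplementary if $\mathbf{F}$ is negative semi-definite, $\mathbf{G}$ positive semi-definite, they share a basis of eigenvectors of $\mathbb{R}^L$, and, if both are singular, additionally $\bigoplus_{\xi\in\sigma(\mathbf{F}),\xi<0}\operatorname{Eig}_{\mathbf{F}}(\xi)=\operatorname{Eig}_{\mathbf{G}}(0)$. *)

(* Defs.v *)
From mathcomp Require Import all_boot all_order all_algebra.
From mathcomp Require Import reals.
From mathcomp Require Import zify.
Set Implicit Arguments. Unset Strict Implicit. Unset Printing Implicit Defensive.
Import Order.TTheory GRing.Theory Num.Theory.
Local Open Scope ring_scope.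

(* L = (d-1)(d+2)/2, dimension of symmetric trace-free d x d matrices *)
Definition Ldim (d : nat) : nat := (((d - 1) * (d + 2)) %/ 2)%N.

(* flattening convention: block i (0-based), component j (0-based) of a
   vector of R^{N L} sits at position i*L + j  (paper: L(i-1)+k) *)
Lemma idx_proof (N L : nat) (i : 'I_N) (j : 'I_L) : (i * L + j < N * L)%N.
Proof.
case: i j => i Hi [j Hj] /=.
have : (i.+1 * L <= N * L)%N by rewrite leq_mul2r Hi orbT.
rewrite mulSn; move: Hj; clear; lia.
Qed.

Definition idx (N L : nat) (i : 'I_N) (j : 'I_L) : 'I_(N * L) :=
  Ordinal (idx_proof i j).

Lemma blkidx_proof (N L : nat) (k : 'I_(N * L)) : (k %/ L < N)%N.
Proof.
case: k => k Hk /=.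
case: L Hk => [|L] Hk; first by rewrite muln0 in Hk.
by rewrite ltn_divLR.
Qed.

Definition blkidx (N L : nat) (k : 'I_(N * L)) : 'I_N := Ordinal (blkidx_proof k).

Definition blk {R : ringType} (N L : nat) (b : 'cV[R]_(N * L)) (i : 'I_N) : 'cV[R]_L :=
  \col_j b (idx i j) 0.

Definition Dmat {R : ringType} (N L : nat) (Dv : 'I_N -> R) : 'M[R]_(N * L) :=
  \matrix_(k, k') (if k == k' then Dv (blkidx k) else 0).

Definition vnorm {R : realType} (L : nat) (x : 'cV[R]_L) : R :=
  Num.sqrt (\sum_j x j 0 ^+ 2).

Definition otimes {R : ringType} (L : nat) (x y : 'cV[R]_L) : 'M[R]_L := x *m y^T.

Definition vrho {R : realType} (N L : nat) (rho : R) (b c : 'cV[R]_(N * L)) (i : 'I_N)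
  : 'cV[R]_L := blk c i + rho *: blk b i.

Definition Sfun {R : realType} (N L : nat) (rho : R) (sig : 'I_N -> R)
  (b c : 'cV[R]_(N * L)) (i : 'I_N) : 'cV[R]_L :=
  Num.max (sig i) (vnorm (vrho rho b c i)) *: blk c i - sig i *: vrho rho b c i.

Definition Xblk {R : realType} (N L : nat) (rho : R) (sig tau : 'I_N -> R)
  (b c : 'cV[R]_(N * L)) (i : 'I_N) : 'M[R]_L :=
  let v := vrho rho b c i in
  (tau i * rho) *: otimes (blk c i) ((vnorm v)^-1 *: v) - (rho * sig i)%:M.

Definition Yblk {R : realType} (N L : nat) (rho : R) (sig tau : 'I_N -> R)
  (b c : 'cV[R]_(N * L)) (i : 'I_N) : 'M[R]_L :=
  let v := vrho rho b c i in
  tau i *: (otimes (blk c i) ((vnorm v)^-1 *: v) + (vnorm v - sig i)%:M).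

Definition eigencomplementary {R : realType} (L : nat) (F G : 'M[R]_L) : Prop :=
  [/\ F^T = F /\ G^T = G,
   (forall x : 'cV[R]_L, (x^T *m F *m x) 0 0 <= 0),
   (forall x : 'cV[R]_L, 0 <= (x^T *m G *m x) 0 0),
   (exists P : 'M[R]_L, P \in unitmx /\
      forall j : 'I_L, exists xi mu : R,
        F *m col j P = xi *: col j P /\ G *m col j P = mu *: col j P)
  & (* if both singular: sum of eigenspaces of F for negative eigenvalues
       equals the kernel Eig_G(0) *)
    (\det F = 0 -> \det G = 0 ->
      forall x : 'cV[R]_L,
        (exists (xi : 'I_L -> R) (y : 'I_L -> 'cV[R]_L),
            (forall k, xi k < 0 /\ F *m y k = xi k *: y k) /\ x = \sum_k y k)
        <-> G *m x = 0)].

(* Main.v *)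
Require Import Defs.
From mathcomp Require Import all_boot all_order all_algebra.
From mathcomp Require Import reals ring lra.
Import Order.TTheory GRing.Theory Num.Theory.
Local Open Scope ring_scope.

Section Core.
Variable R : realType.

Lemma unitQ n (Q : 'M[R]_n) (a b : R) : Q *m Q = Q -> b != 0 -> a + b != 0 ->
  (a *: Q + b%:M) \in unitmx.
Proof.
move=> QQ b0 ab0.
apply: (proj1 (@mulmx1_unit _ _ _ ((- a / (b * (a + b))) *: Q + b^-1%:M) _)).
rewrite mulmxDl !mulmxDr -scalar_mxM -!scalemxAl -!scalemxAr QQ mul_mx_scalar mul_scalar_mx.
rewrite !scalerA.
apply/matrixP => i j; rewrite !mxE.
case: eqP => _; rewrite ?mulr1n ?mulr0n. field; try by apply/andP. all: try field; try by apply/andP.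
Qed.

Lemma dot_ge0 m (x : 'cV[R]_m) : 0 <= (x^T *m x) 0 0.
Proof. rewrite mxE; apply: sumr_ge0 => j _; rewrite mxE -expr2 sqr_ge0 //. Qed.

Lemma dot_eq0 m (x : 'cV[R]_m) : (x^T *m x) 0 0 = 0 -> x = 0.
Proof.
rewrite mxE => h; apply/matrixP => i j; rewrite ord1 mxE.
have hn : forall k : 'I_m, true -> 0 <= x^T 0 k * x k 0.
  by move=> k _; rewrite mxE -expr2 sqr_ge0.
have := @psumr_eq0P _ _ _ _ hn h i isT.
by rewrite mxE -expr2 => /eqP; rewrite sqrf_eq0 => /eqP.
Qed.

Lemma orth_basis L (u : 'cV[R]_L.+1) : u^T *m u = 1%:M ->
  exists P : 'M[R]_L.+1, P^T *m P = 1%:M /\ col 0 P = u.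
Proof.
move=> hu.
pose e : 'cV[R]_L.+1 := delta_mx 0 0.
pose w := u - e.
have eu : e^T *m u = (u 0 0)%:M.
  by rewrite trmx_delta -rowE [LHS]mx11_scalar mxE.
have ue : u^T *m e = (u 0 0)%:M.
  by rewrite -colE [LHS]mx11_scalar !mxE.
have ee : e^T *m e = 1%:M.
  by rewrite trmx_delta mul_delta_mx; apply/matrixP => i j; rewrite !ord1 !mxE.
have hq : w^T *m w = (2 - 2 * u 0 0)%:M.
  rewrite /w [(u - e)^T]linearB /= mulmxBl !mulmxBr hu eu ue ee.
  by apply/matrixP => i j; rewrite !ord1 !mxE /= !mulr1n; ring.
case: (eqVneq (u 0 0) 1) => h1.
  exists 1%:M; split; first by rewrite trmx1 mulmx1.
  have w0 : w = 0 by apply: dot_eq0; rewrite hq h1 mxE /=; ring.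
  by rewrite colE mul1mx; apply/eqP; rewrite eq_sym -subr_eq0 -/w w0.
have q0 : 2 - 2 * u 0 0 != 0.
  apply: contra h1; rewrite subr_eq0 => /eqP h; apply/eqP.
  have : 2 * (u 0 0 - 1) = 0 by rewrite mulrBr -h mulr1 subrr.
  by move/eqP; rewrite mulf_eq0 pnatr_eq0 /= subr_eq0 => /eqP.
pose k := - 2 / (2 - 2 * u 0 0).
pose W := w *m w^T.
have WW : W *m W = (2 - 2 * u 0 0) *: W.
  by rewrite /W mulmxA -(mulmxA w) hq mul_mx_scalar scalemxAl.
exists (1%:M + k *: W); split.
  have HT : (1%:M + k *: W)^T = 1%:M + k *: W.
    by rewrite [LHS]linearD /= [(k *: W)^T]linearZ /= trmx_mul trmxK trmx1.
  rewrite HT.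
  rewrite mulmxDl !mulmxDr mul1mx mulmx1 -!scalemxAl -!scalemxAr WW scalerA.
  rewrite mul1mx scalerA -addrA -!scalerDl.
  have -> : k + (k + k * k * (2 - 2 * u 0 0)) = 0 by rewrite /k; field.
  by rewrite scale0r addr0.
rewrite colE -/e mulmxDl mul1mx -scalemxAl /W -mulmxA.
have -> : w^T *m e = (u 0 0 - 1)%:M.
  rewrite /w [(u - e)^T]linearB /= mulmxBl ue ee.
  by apply/matrixP => i j; rewrite !ord1 !mxE /= !mulr1n.
rewrite mul_mx_scalar scalerA.
have -> : k * (u 0 0 - 1) = 1 by rewrite /k; field.
by rewrite scale1r /w addrC subrK.
Qed.

Lemma mx11_mulE (A B : 'M[R]_1) : (A *m B) 0 0 = A 0 0 * B 0 0.
Proof. by rewrite mxE big_ord1. Qed.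

Lemma core L (u : 'cV[R]_L.+1) (hu : u^T *m u = 1%:M) (r s n t : R)
  (hr : 0 < r) (hs : 0 < s) (ht0 : 0 <= t) (ht1 : t <= 1)
  (htn : 0 < t -> s <= n) :
  eigencomplementary ((t * r) *: (s *: (u *m u^T)) - (r * s)%:M)
                     (t *: (s *: (u *m u^T) + (n - s)%:M)).
Proof.
set Q := u *m u^T.
have QT : Q^T = Q by rewrite /Q trmx_mul trmxK.
have QQ : Q *m Q = Q by rewrite /Q -mulmxA (mulmxA u^T) hu mul1mx.
have qQ : forall x : 'cV[R]_L.+1,
    (x^T *m Q *m x) 0 0 = ((u^T *m x) 0 0) ^+ 2.
  move=> x; rewrite /Q mulmxA -(mulmxA _ u^T) mx11_mulE.
  have -> : x^T *m u = (u^T *m x)^T by rewrite trmx_mul trmxK.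
  by rewrite mxE expr2.
have qx : forall x : 'cV[R]_L.+1,
    ((u^T *m x) 0 0) ^+ 2 <= (x^T *m x) 0 0.
  move=> x; set w := (u^T *m x) 0 0.
  have := dot_ge0 _ (x - w *: u).
  rewrite [(x - w *: u)^T]linearB /= [(w *: u)^T]linearZ /=.
  rewrite mulmxBl !mulmxBr -!scalemxAl -!scalemxAr hu.
  have -> : x^T *m u = (u^T *m x)^T by rewrite trmx_mul trmxK.
  rewrite /w; set A := x^T *m x; set B := u^T *m x.
  rewrite !mxE /= mulr1n; lra.
split.
- split.
    by rewrite [LHS]linearB /= [(_ *: _)^T]linearZ /= [(_ *: Q)^T]linearZ /= QT tr_scalar_mx.
  by rewrite [LHS]linearZ /= [(_ + _)^T]linearD /= [(_ *: Q)^T]linearZ /= QT tr_scalar_mx.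
- move=> x; rewrite mulmxBr mulmxBl -!scalemxAr -!scalemxAl mul_mx_scalar -scalemxAl.
  have := qx x; have := sqr_ge0 ((u^T *m x) 0 0); have := qQ x.
  set w2 := _ ^+ 2; set M1 := x^T *m Q *m x; set M2 := x^T *m x => hq h0 h1.
  clearbody M1 M2; rewrite !mxE hq; set xx := M2 0 0 in h1 *.
  have hrs : 0 < r * s by apply: mulr_gt0.
  have : 0 <= (r * s) * ((1 - t) * w2 + (xx - w2)).
    apply: mulr_ge0; first exact: ltW.
    apply: addr_ge0; first by apply: mulr_ge0 => //; lra.
    lra.
  move=> h; nra.
- move=> x; rewrite -scalemxAr -scalemxAl mulmxDr mulmxDl -scalemxAr -scalemxAl.
  rewrite mul_mx_scalar -scalemxAl.
  have := qx x; have := sqr_ge0 ((u^T *m x) 0 0); have := qQ x.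
  set w2 := _ ^+ 2; set M1 := x^T *m Q *m x; set M2 := x^T *m x => hq h0 h1.
  clearbody M1 M2; rewrite !mxE hq; set xx := M2 0 0 in h1 *.
  have [->|tpos] := eqVneq t 0; first by rewrite mul0r.
  have tp : 0 < t by rewrite lt_def tpos ht0.
  have hsn := htn tp.
  apply: mulr_ge0 => //; apply: addr_ge0; apply: mulr_ge0; lra.
- have [P [PtP P0]] := orth_basis _ _ hu.
  exists P; split; first by have [] := mulmx1_unit PtP.
  move=> j.
  have hz : u^T *m col j P = ((P^T *m P) 0 j)%:M.
    rewrite -P0 tr_col [LHS]mx11_scalar; congr (_%:M).
    rewrite !mxE; apply: eq_bigr => k _; rewrite !mxE //.
  rewrite PtP mxE in hz.
  have key : Q *m col j P = ((0 : 'I_L.+1) == j)%:R *: col j P.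
    rewrite /Q -mulmxA hz mul_mx_scalar.
    by case: eqVneq => [<-|_]; rewrite ?scale0r ?scale1r // P0.
  do 2 eexists; split.
    rewrite mulmxBl -!scalemxAl key mul_scalar_mx !scalerA -scalerBl.
    reflexivity.
  rewrite -!scalemxAl mulmxDl -!scalemxAl key mul_scalar_mx !scalerA -scalerDl scalerA.
  reflexivity.
- move=> dX dY x.
  have z0 : (0 : R)%:M = 0 :> 'M[R]_L.+1.
    by apply/matrixP => i j; rewrite !mxE mul0rn.
  have sN : forall a : R, (- a)%:M = - a%:M :> 'M[R]_L.+1.
    by move=> a; apply/matrixP => i j; rewrite !mxE mulNrn.
  have hrs : 0 < r * s by apply: mulr_gt0.
  have t1 : t = 1.
    case: (eqVneq t 1) => // tn1; exfalso.
    have : ((t * r * s) *: Q + (- (r * s))%:M) \in unitmx.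
      apply: unitQ => //; first by rewrite oppr_eq0 gt_eqF.
      have -> : t * r * s + - (r * s) = (t - 1) * (r * s) by ring.
      by apply: mulf_neq0; [rewrite subr_eq0 | rewrite gt_eqF].
    rewrite sN -scalerA; by rewrite unitmxE unitfE dX eqxx.
  have hsn : s <= n by apply: htn; rewrite t1 ltr01.
  have ns : n = s.
    case: (eqVneq n s) => // nns; exfalso.
    have : (s *: Q + (n - s)%:M) \in unitmx.
      apply: unitQ => //; first by rewrite subr_eq0.
      have -> : s + (n - s) = n by ring.
      by rewrite gt_eqF // (lt_le_trans hs hsn).
    by rewrite unitmxE unitfE -[s *: Q + _]scale1r -t1 dY eqxx.
  rewrite t1 ns subrr z0 addr0 scale1r mul1r scalerA.
  have uQ : u^T *m Q = u^T by rewrite /Q mulmxA hu mul1mx.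
  have uX : u^T *m ((r * s) *: Q - (r * s)%:M) = 0.
    by rewrite mulmxBr -scalemxAr uQ mul_mx_scalar subrr.
  have uu : forall y : 'cV[R]_L.+1, u^T *m (u *m (u^T *m y)) = u^T *m y.
    by move=> y; rewrite mulmxA hu mul1mx.
  split.
    move=> [xi [y [hy ->]]].
    rewrite mulmx_sumr big1 // => k _.
    have [hxi hXy] := hy k.
    have : u^T *m y k = 0.
      have := congr1 (mulmx u^T) hXy.
      rewrite mulmxA uX mul0mx -scalemxAr => /esym/eqP.
      by rewrite scaler_eq0 lt_eqF //= => /eqP.
    by rewrite -scalemxAl /Q -mulmxA => ->; rewrite mulmx0 scaler0.
  move=> hY.
  have ux : u^T *m x = 0.
    have := congr1 (mulmx u^T) hY.
    rewrite mulmx0 -scalemxAl -scalemxAr /Q -mulmxA uu => /eqP.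
    by rewrite scaler_eq0 gt_eqF //= => /eqP.
  exists (fun _ => - (r * s)), (fun k => if k == 0 then x else 0); split.
    move=> k; split; first by rewrite oppr_lt0.
    case: eqP => _; last by rewrite mulmx0 scaler0.
    by rewrite mulmxBl -scalemxAl /Q -mulmxA ux mulmx0 scaler0 mul_scalar_mx sub0r scaleNr.
  by rewrite (bigD1 0) //= big1 ?addr0 // => k /negbTE ->.
Qed.

Lemma main_gen L N (rho : R) (sig tau : 'I_N -> R) (b c : 'cV[R]_(N * L.+1))
  (i : 'I_N) (hrho : 0 < rho) (hsig : 0 < sig i)
  (hS : Sfun rho sig b c i = 0) (ht : 0 <= tau i <= 1)
  (ht0 : vnorm (vrho rho b c i) < sig i -> tau i = 0)
  (ht1 : vnorm (vrho rho b c i) > sig i -> tau i = 1) :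
  eigencomplementary (Xblk rho sig tau b c i) (Yblk rho sig tau b c i).
Proof.
case/andP: ht => ta tb.
rewrite /Xblk /Yblk /=.
move: hS; rewrite /Sfun.
set v := vrho rho b c i; set nn := vnorm v; set s := sig i; set ci := blk c i.
move=> hS.
have [lt_ns|le_sn] := ltP nn s.
  pose e : 'cV[R]_L.+1 := delta_mx 0 0.
  have ee : e^T *m e = 1%:M.
    by rewrite trmx_delta mul_delta_mx; apply/matrixP => p q; rewrite !ord1 !mxE.
  have := @core L e ee rho s nn 0 hrho hsig (lexx _) ler01.
  rewrite ht0 // mul0r !scale0r; apply.
  by rewrite ltxx.
have nn0 : 0 < nn by apply: lt_le_trans le_sn.
have hc : ci = s *: (nn^-1 *: v).
  move: hS; rewrite max_r // => /eqP; rewrite subr_eq0 => /eqP h.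
  by rewrite scalerA mulrC -scalerA -h scalerA mulVf ?gt_eqF // scale1r.
set u := nn^-1 *: v.
have hu : u^T *m u = 1%:M.
  have hvv : (v^T *m v) 0 0 = nn ^+ 2.
    rewrite /nn /vnorm sqr_sqrtr; last first.
      by apply: sumr_ge0 => j _; rewrite sqr_ge0.
    by rewrite mxE; apply: eq_bigr => j _; rewrite mxE expr2.
  rewrite /u [(_ *: v)^T]linearZ /= -scalemxAl -scalemxAr scalerA.
  apply/matrixP => p q; rewrite !ord1.
  move: hvv; set M := v^T *m v; clearbody M => hvv.
  rewrite !mxE hvv /= mulr1n; field; by rewrite gt_eqF.
have := @core L u hu rho s nn (tau i) hrho hsig ta tb.
rewrite /otimes hc -/u -[(s *: u) *m _]scalemxAl; apply=> tp.
exact: le_sn.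
Qed.
End Core.

Theorem lemma4p2 (R : realType) (d M N : nat) (hd : d = 2%N \/ d = 3%N)
  (rho : R) (hrho : 0 < rho)
  (sig : 'I_N -> R) (hsig : forall i, 0 < sig i)
  (Dv : 'I_N -> R) (hD : forall i, 0 < Dv i)
  (A : 'M[R]_(d * M)) (B : 'M[R]_(d * M, N * Ldim d)) (C : 'M[R]_(N * Ldim d))
  (l : 'cV[R]_(d * M))
  (a : 'cV[R]_(d * M)) (b c : 'cV[R]_(N * Ldim d))
  (hF1 : A *m a + B *m b + l = 0)
  (hF2 : B^T *m a + C *m b + @Dmat R N (Ldim d) Dv *m c = 0)
  (hF3 : forall i, Sfun rho sig b c i = 0)
  (tau : 'I_N -> R) (htau : forall i, 0 <= tau i <= 1)
  (htau0 : forall i, vnorm (vrho rho b c i) < sig i -> tau i = 0)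
  (htau1 : forall i, vnorm (vrho rho b c i) > sig i -> tau i = 1) :
  forall i : 'I_N,
    eigencomplementary (Xblk rho sig tau b c i) (Yblk rho sig tau b c i).
Proof.
move=> i.
case: hd => hd; subst d.
- exact: (@main_gen R 1 N rho sig tau b c i hrho (hsig i) (hF3 i) (htau i) (htau0 i) (htau1 i)).
- exact: (@main_gen R 4 N rho sig tau b c i hrho (hsig i) (hF3 i) (htau i) (htau0 i) (htau1 i)).
Qed.
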